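(* Let $U=\{\xi_1,\dots,\xi_p\}\subset\mathbb{R}^k$ be finite, for $j\in\Lambda=\{1,\dots,m\}$ let $f_j:\mathbb{R}^n\times U\to\mathbb{R}$ with $x\mapsto f_j(x,\xi_i)$ continuously differentiable for each $i\in\bar\Lambda=\{1,\dots,p\}$, and let $\Phi=(\Phi_1,\dots,\Phi_m)$ with $\Phi_j(x)=\max_{i\in\bar\Lambda}f_j(x,\xi_i)$. (i) Let $\{x^k\}$ be any infinite sequence of non-critical points in $\mathbb{R}^n$ such that $\Phi(x^{k+1})\le\Phi(x^k)$ (componentwise) for all $k$. If $x^*$ is any accumulation point of $\{x^k\}$, then $\Phi(x^* )\le\Phi(x^k)$ for all $k$ and $\lim_{k\to\infty}\Phi(x^k)=\Phi(x^* )$. Moreover, $\Phi$ is constant on the set of accumulation points of $\{x^k\}$. (ii) If $\{x^k\}$ is generated by Algorithm 1 (described in the context) and has an accumulation point, then all conclusions of (i) hold for this sequence.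
   Context: For vectors, $u\le v$ means componentwise. For $x\in\mathbb{R}^n$, $I_j(x)=\{i\in\bar\Lambda:f_j(x,\xi_i)=\Phi_j(x)\}$; $x^*$ is a critical point for $\Phi$ if there is no $v\in\mathbb{R}^n$ with $\nabla f_j(x^*,\xi_i)^Tv<0$ for all $j\in\Lambda$, $i\in I_j(x^* )$; otherwise it is non-critical. For $x\in\mathbb{R}^n$, let $\vartheta_x(t)=\max_{j\in\Lambda}\max_{i\in\bar\Lambda}\{f_j(x,\xi_i)+\nabla f_j(x,\xi_i)^Tt-\Phi_j(x)\}$, let $t(x)$ be the unique minimizer over $t$ of $\vartheta_x(t)+\frac12\|t\|^2$, and $\Theta(x)$ its optimal value. Algorithm 1: choose $\epsilon>0$, $\beta\in(0,1)$, $x^0\in\mathbb{R}^n$, set $k=0$. Step 2: compute $t^k=t(x^k)$ and $\Theta(x^k)$. Step 3: if $|\Theta(x^k)|<\epsilon$, stop. Step 4: let $\alpha_k$ be the largest $\alpha\in\{1/2^r:r=1,2,\dots\}$ such that for all $j$, $\Phi_j(x^k+\alpha t^k)\le\Phi_j(x^k)+\alpha\beta\big(\max_{i\in\bar\Lambda}\{f_j(x^k,\xi_i)+\nabla f_j(x^k,\xi_i)^Tt^k\}-\Phi_j(x^k)\big)$. Step 5: set $x^{k+1}=x^k+\alpha_kt^k$, $k:=k+1$, go to Step 2. *)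

(* Defs.v *)
From HB Require Import structures.
From mathcomp Require Import all_boot all_order all_algebra.
From mathcomp Require Import all_classical all_reals all_analysis.
Set Implicit Arguments. Unset Strict Implicit. Unset Printing Implicit Defensive.
Import Order.TTheory GRing.Theory Num.Theory numFieldNormedType.Exports.
Local Open Scope ring_scope.
Local Open Scope classical_set_scope.

(* maximum of a finite nonempty family (the value 0 on the empty index type
   is a junk value, never used since the index sets are assumed nonempty) *)
Definition bmax {R : realType} {q : nat} (g : 'I_q -> R) : R :=
  match [pick i : 'I_q] with
  | Some i0 => \big[Num.max/g i0]_(i < q) g i
  | None => 0
  end.

Section Defs.
Context {R : realType} {n d p m : nat}.
Variables (xi : 'I_p -> 'rV[R]_d) (f : 'I_m -> 'rV[R]_n -> 'rV[R]_d -> R).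

Definition Phi (j : 'I_m) (x : 'rV[R]_n) : R := bmax (fun i : 'I_p => f j x (xi i)).

Definition PhiV (x : 'rV[R]_n) : 'rV[R]_m := \row_j Phi j x.

(* grad f_j(x, xi_i)^T v, i.e. the differential of y |-> f_j(y, xi_i) at x applied to v *)
Definition gradv (j : 'I_m) (i : 'I_p) (x v : 'rV[R]_n) : R :=
  'd (fun y => f j y (xi i)) x v.

Definition active (j : 'I_m) (x : 'rV[R]_n) (i : 'I_p) : Prop :=
  f j x (xi i) = Phi j x.

Definition critical (x : 'rV[R]_n) : Prop :=
  ~ (exists v : 'rV[R]_n, forall j i, active j x i -> gradv j i x v < 0).

Definition noncritical (x : 'rV[R]_n) : Prop := ~ critical x.

Definition sqnorm (t : 'rV[R]_n) : R := \sum_(l < n) t ord0 l ^+ 2.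

Definition vartheta (x t : 'rV[R]_n) : R :=
  bmax (fun j : 'I_m => bmax (fun i : 'I_p => f j x (xi i) + gradv j i x t - Phi j x)).

Definition subobj (x t : 'rV[R]_n) : R := vartheta x t + 2^-1 * sqnorm t.

(* t is the (unique) minimizer t(x) of the subproblem; Theta(x) = subobj x t *)
Definition is_tdir (x t : 'rV[R]_n) : Prop := forall s, subobj x t <= subobj x s.

Definition armijo (beta : R) (x t : 'rV[R]_n) (a : R) : Prop :=
  forall j, Phi j (x + a *: t) <=
    Phi j x + a * beta * (bmax (fun i : 'I_p => f j x (xi i) + gradv j i x t) - Phi j x).

(* x is an infinite sequence generated by Algorithm 1 with parameters eps, beta
   and starting point x 0 (the algorithm never stops) *)
Definition alg1_seq (eps beta : R) (x : nat -> 'rV[R]_n) : Prop :=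
  exists (t : nat -> 'rV[R]_n) (alpha : nat -> R), forall k,
    [/\ is_tdir (x k) (t k),
        ~ (`|subobj (x k) (t k)| < eps),
        (exists r, (0 < r)%N /\ alpha k = (2 ^+ r)^-1) /\ armijo beta (x k) (t k) (alpha k),
        (forall r, (0 < r)%N -> armijo beta (x k) (t k) ((2 ^+ r)^-1) ->
                   (2 ^+ r)^-1 <= alpha k)
      & x k.+1 = x k + alpha k *: t k].

Definition conclusions (x : nat -> 'rV[R]_n) : Prop :=
  (forall xs, cluster (x @ \oo) xs ->
     (forall k j, Phi j xs <= Phi j (x k)) /\ ((fun k => PhiV (x k)) @ \oo --> PhiV xs))
  /\ (forall a b, cluster (x @ \oo) a -> cluster (x @ \oo) b -> PhiV a = PhiV b).

End Defs.

(* Main.v *)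
Require Import Defs.
From HB Require Import structures.
From mathcomp Require Import all_boot all_order all_algebra.
From mathcomp Require Import all_classical all_reals all_analysis.
From mathcomp Require Import lra.
Import Order.TTheory GRing.Theory Num.Theory numFieldNormedType.Exports.
Local Open Scope ring_scope.
Local Open Scope classical_set_scope.

Section H.
Context {R : realType}.

Lemma bmax_ge q (g : 'I_q -> R) i : g i <= bmax g.
Proof.
rewrite /bmax; case: pickP => [i0 _|/(_ i)//].
have : i \in index_enum 'I_q by rewrite mem_index_enum.
elim: (index_enum _) => // a r IH; rewrite inE big_cons => /orP[/eqP->|/IH h].
  by rewrite le_max lexx.
by rewrite le_max h orbT.
Qed.

Lemma bmax_ex q (g : 'I_q -> R) : (0 < q)%N -> exists i, bmax g = g i.
Proof.
move=> hq; rewrite /bmax; case: pickP => [i0 _|/(_ (Ordinal hq))//].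
apply: (big_ind (fun y => exists i, y = g i)); first by exists i0.
  move=> a b [i ->] [i' ->]; case: (leP (g i) (g i')) => _; by [exists i'|exists i].
by move=> i _; exists i.
Qed.

Lemma bmax_le q (g : 'I_q -> R) c : (0 < q)%N -> (forall i, g i <= c) -> bmax g <= c.
Proof. by move=> hq h; have [i ->] := bmax_ex _ g hq. Qed.

End H.

Section G.
Context {R : realType} {n d p m : nat}.
Variables (xi : 'I_p -> 'rV[R]_d) (f : 'I_m -> 'rV[R]_n -> 'rV[R]_d -> R).
Hypothesis hp : (0 < p)%N.

Lemma Phi_near j xs (hc : forall i, {for xs, continuous (fun y => f j y (xi i))})
  (eps : R) : 0 < eps -> \forall y \near xs, `|Phi xi f j y - Phi xi f j xs| < eps.
Proof.
move=> he.
have H : \forall y \near xs, forall i, `|f j xs (xi i) - f j y (xi i)| < eps.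
  apply: (@filter_forall _ _ (fun i => [set y | `|f j xs (xi i) - f j y (xi i)| < eps]) (nbhs xs)) => i.
  by move: (hc i) => /cvgrPdist_lt; apply.
move: H; apply: filterS => y Hy.
have [i1 e1] := bmax_ex _ (fun i => f j y (xi i)) hp.
have [i2 e2] := bmax_ex _ (fun i => f j xs (xi i)) hp.
have g1 := bmax_ge _ (fun i => f j xs (xi i)) i1.
have g2 := bmax_ge _ (fun i => f j y (xi i)) i2.
have := Hy i1; have := Hy i2; rewrite /Phi e1 e2 /= in g1 g2 *.
rewrite !ltr_norml => /andP[a1 a2] /andP[b1 b2].
by apply/andP; split; lra.
Qed.

Lemma gen_concl (x : nat -> 'rV[R]_n)
  (hc : forall j i y, {for y, continuous (fun z => f j z (xi i))})
  (hmono : forall k j, Phi xi f j (x k.+1) <= Phi xi f j (x k)) :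
  conclusions xi f x.
Proof.
have mono : forall j k l, (k <= l)%N -> Phi xi f j (x l) <= Phi xi f j (x k).
  move=> j k l /subnK <-; elim: (l - k)%N => // e IH.
  by rewrite addSn; exact: le_trans (hmono _ _) IH.
have clus : forall xs, cluster (x @ \oo) xs -> forall j (eps : R) N, 0 < eps ->
    exists k, (N <= k)%N /\ `|Phi xi f j (x k) - Phi xi f j xs| < eps.
  move=> xs cl j eps N he.
  have := cl [set y | exists2 k, (N <= k)%N & y = x k]
             [set z | `|Phi xi f j z - Phi xi f j xs| < eps].
  case.
  - by exists N => // k /= hk; exists k.
  - exact: Phi_near.
  by move=> y [[k hk ->] /= h]; exists k.
have part1 : forall xs, cluster (x @ \oo) xs ->
   (forall k j, Phi xi f j xs <= Phi xi f j (x k)) /\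
   (forall j (eps : R), 0 < eps -> \forall k \near \oo,
        `|Phi xi f j xs - Phi xi f j (x k)| < eps).
  move=> xs cl; split.
    move=> k j; rewrite leNgt; apply/negP => hlt.
    have [l [hl]] : exists l, (k <= l)%N /\ `|Phi xi f j (x l) - Phi xi f j xs| < Phi xi f j xs - Phi xi f j (x k).
      by apply: clus => //; rewrite subr_gt0.
    have := mono j k l hl; rewrite ltr_norml => h /andP[a b]; lra.
  move=> j eps he.
  have [K [_ hK]] := clus xs cl j eps 0%N he.
  exists K => // l /= hl.
  have h1 : Phi xi f j xs <= Phi xi f j (x l).
    rewrite leNgt; apply/negP => hlt.
    have [l2 [hl2]] : exists l2, (l <= l2)%N /\ `|Phi xi f j (x l2) - Phi xi f j xs| < Phi xi f j xs - Phi xi f j (x l).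
      by apply: clus => //; rewrite subr_gt0.
    have := mono j l l2 hl2; rewrite ltr_norml => h /andP[a b]; lra.
  have := mono j K l hl; move: hK; rewrite !ltr_norml => /andP[a b] c.
  apply/andP; split; lra.
have cv : forall xs, cluster (x @ \oo) xs ->
    (fun k => PhiV xi f (x k)) @ \oo --> PhiV xi f xs.
  move=> xs cl; have [P1 P2] := part1 xs cl.
  apply: (proj2 (@cvgrPdist_lt R _ nat \oo _ (fun k => PhiV xi f (x k)) (PhiV xi f xs))) => eps he.
  have H : \forall k \near \oo, forall j, `|Phi xi f j xs - Phi xi f j (x k)| < eps.
    by apply: filter_forall => j; exact: P2.
  move: H; apply: filterS => k Hk.
  change (mx_norm (PhiV xi f xs - PhiV xi f (x k)) < eps).
  have [->//|/mx_norm_neq0 [[i j] ->]] := eqVneq (mx_norm (PhiV xi f xs - PhiV xi f (x k))) 0.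
  by rewrite /= !mxE.
split.
  by move=> xs cl; split; [exact: (part1 xs cl).1 | exact: cv].
move=> a b ca cb.
have e1 := cvg_lim _ (cv a ca); have e2 := cvg_lim _ (cv b cb).
by rewrite -e1 ?e2 //; exact: hausdorff_space_subproof.
Qed.
End G.

Theorem lemma4p4 (R : realType) (n d p m : nat)
  (xi : 'I_p -> 'rV[R]_d) (f : 'I_m -> 'rV[R]_n -> 'rV[R]_d -> R)
  (hp : (0 < p)%N) (hm : (0 < m)%N) (xi_inj : injective xi)
  (hC1 : forall j i,
      (forall x, differentiable (fun y => f j y (xi i)) x) /\
      (forall v, continuous (fun x => 'd (fun y => f j y (xi i)) x v))) :
  (* (i) *)
  (forall x : nat -> 'rV[R]_n,
      (forall k, noncritical xi f (x k)) ->
      (forall k j, Phi xi f j (x k.+1) <= Phi xi f j (x k)) ->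
      conclusions xi f x)
  /\
  (* (ii) *)
  (forall (eps beta : R) (x : nat -> 'rV[R]_n),
      0 < eps -> 0 < beta < 1 ->
      alg1_seq xi f eps beta x ->
      (exists xs, cluster (x @ \oo) xs) ->
      conclusions xi f x).
Proof.
have hc : forall j i y, {for y, continuous (fun z => f j z (xi i))}.
  by move=> j i y; exact: differentiable_continuous ((hC1 j i).1 y).
split.
  by move=> x _ hmono; exact: (@gen_concl _ _ _ _ _ xi f hp _ hc hmono).
move=> eps beta x _ /andP[hb0 hb1] [t [alpha H]] _.
apply: (@gen_concl _ _ _ _ _ xi f hp _ hc) => k j.
have [Ht _ [[r [hr ha]] Harm] _ ->] := H k.
have v0 : vartheta xi f (x k) 0 <= 0.
  apply: bmax_le => // j0; apply: bmax_le => // i0.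
  rewrite /gradv linear0 addr0 subr_le0.
  exact: (bmax_ge _ (fun i => f j0 (x k) (xi i)) i0).
have sq0 : sqnorm (0 : 'rV[R]_n) = 0.
  by rewrite /sqnorm big1 // => l _; rewrite mxE expr2 mul0r.
have sqt : 0 <= 2^-1 * sqnorm (t k).
  by apply: mulr_ge0; [rewrite invr_ge0 ler0n | apply: sumr_ge0 => l _; exact: sqr_ge0].
have := Ht 0; rewrite /subobj sq0 mulr0 addr0 => h.
have vt : vartheta xi f (x k) (t k) <= 0 by lra.
have [i0 e0] := bmax_ex _ (fun i => f j (x k) (xi i) + gradv xi f j i (x k) (t k)) hp.
have g1 := bmax_ge _ (fun i => f j (x k) (xi i) + gradv xi f j i (x k) (t k) - Phi xi f j (x k)) i0.
have g2 := bmax_ge _ (fun j => bmax (fun i => f j (x k) (xi i) + gradv xi f j i (x k) (t k) - Phi xi f j (x k))) j.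
rewrite /vartheta in vt; rewrite /= in g1 g2.
have hD : bmax (fun i => f j (x k) (xi i) + gradv xi f j i (x k) (t k)) - Phi xi f j (x k) <= 0.
  rewrite e0; lra.
have ha0 : 0 < alpha k by rewrite ha invr_gt0 exprn_gt0.
have hprod : alpha k * beta * (bmax (fun i => f j (x k) (xi i) + gradv xi f j i (x k) (t k)) - Phi xi f j (x k)) <= 0.
  by apply: mulr_ge0_le0 => //; apply: mulr_ge0; apply: ltW.
have := Harm j; lra.
Qed.
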